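(* Let $Q\ge1$ and $\Omega_Q=\{(x,y)\in\mathbb R^2:\ x>0,\ y>0,\ xy\le Q\}$. Let $\mathcal B(x,y)=4Q^{1/2}(xy)^{1/2}-xy$ and, for $X_0\in\Omega_Q$, $\mathcal B_{X_0}(X)=\mathcal B(X)-\mathcal B'(X_0)(X-X_0)$, where $\mathcal B'(X_0)$ is the gradient of $\mathcal B$ at $X_0$. Then (1) $0\le\mathcal B(X)\le 4Q$ for all $X\in\Omega_Q$; (2) for all $X_0=(x_0,y_0)$, $X=(x,y)$ in $\Omega_Q$, $$\mathcal B_{X_0}(X_0)-\mathcal B_{X_0}(X)\ge c\,|x-x_0|\cdot|y-y_0|,$$ where $c$ is an absolute constant. *)

(* Defs.v *)
From Stdlib Require Import Reals Lra.
From Coquelicot Require Import Coquelicot.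
Open Scope R_scope.

Definition OmegaQ (Q x y : R) : Prop := 0 < x /\ 0 < y /\ x * y <= Q.

Definition Bell (Q x y : R) : R := 4 * sqrt Q * sqrt (x * y) - x * y.

Definition dBx (Q x0 y0 : R) : R := Derive (fun t => Bell Q t y0) x0.
Definition dBy (Q x0 y0 : R) : R := Derive (fun t => Bell Q x0 t) y0.

Definition BellX0 (Q x0 y0 x y : R) : R :=
  Bell Q x y - (dBx Q x0 y0 * (x - x0) + dBy Q x0 y0 * (y - y0)).

(* Main.v *)
Require Import Defs.
From Stdlib Require Import Reals Lra Psatz.
From Coquelicot Require Import Coquelicot.
Open Scope R_scope.

Lemma dBx_eq Q x0 y0 : 0 < x0 -> 0 < y0 ->
  dBx Q x0 y0 = 4 * sqrt Q * (1 * y0 * / (2 * sqrt (x0 * y0))) + - (1 * y0).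
Proof.
  intros. unfold dBx. apply is_derive_unique. unfold Bell. auto_derive.
  - nra.
  - reflexivity.
Qed.

Lemma dBy_eq Q x0 y0 : 0 < x0 -> 0 < y0 ->
  dBy Q x0 y0 = 4 * sqrt Q * (x0 * 1 * / (2 * sqrt (x0 * y0))) + - (x0 * 1).
Proof.
  intros. unfold dBy. apply is_derive_unique. unfold Bell. auto_derive.
  - nra.
  - reflexivity.
Qed.

Lemma sq_sqrt a : 0 <= a -> sqrt a * sqrt a = a.
Proof. intros; apply sqrt_sqrt; auto. Qed.

Theorem lemma5p2 :
  (forall Q x y : R, 1 <= Q -> OmegaQ Q x y ->
     0 <= Bell Q x y <= 4 * Q) /\
  (exists c : R, 0 < c /\
     forall Q x0 y0 x y : R, 1 <= Q -> OmegaQ Q x0 y0 -> OmegaQ Q x y ->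
       BellX0 Q x0 y0 x0 y0 - BellX0 Q x0 y0 x y >= c * Rabs (x - x0) * Rabs (y - y0)).
Proof.
  split.
  - intros Q x y HQ [Hx [Hy Hxy]]. unfold Bell.
    assert (Hu : sqrt (x*y) <= sqrt Q) by (apply sqrt_le_1_alt; lra).
    assert (Hu0 : 0 <= sqrt (x*y)) by apply sqrt_pos.
    assert (Hs : sqrt Q * sqrt Q = Q) by (apply sq_sqrt; lra).
    assert (Hs0 : 0 <= sqrt Q) by apply sqrt_pos.
    assert (Hxy2 : sqrt (x*y) * sqrt (x*y) = x*y) by (apply sq_sqrt; nra).
    split; [nra|]. pose proof (pow2_ge_0 (2*sqrt Q - sqrt (x*y))). nra.
  - exists 1. split; [lra|].
    intros Q x0 y0 x y HQ [Hx0 [Hy0 H0]] [Hx [Hy H1]].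
    unfold BellX0, Bell. rewrite dBx_eq, dBy_eq by lra.
    set (s := sqrt Q). set (u := sqrt (x*y)). set (u0 := sqrt (x0*y0)).
    assert (Hs : s * s = Q) by (apply sq_sqrt; lra).
    assert (Hu : u * u = x*y) by (apply sq_sqrt; nra).
    assert (Hu0 : u0 * u0 = x0*y0) by (apply sq_sqrt; nra).
    assert (Hu0p : 0 < u0) by (apply sqrt_lt_R0; nra).
    assert (Hup : 0 <= u) by apply sqrt_pos.
    assert (Hsu0 : u0 <= s) by (apply sqrt_le_1_alt; lra).
    set (a := sqrt (x*y0)). set (b := sqrt (x0*y)).
    assert (Ha : a * a = x*y0) by (apply sq_sqrt; nra).
    assert (Hb : b * b = x0*y) by (apply sq_sqrt; nra).
    assert (Hab : a * b = u * u0).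
    { unfold a, b, u, u0. rewrite <- !sqrt_mult by nra. f_equal; ring. }
    assert (Eab : (a-b)*(a-b) = x*y0 + x0*y - 2*u*u0) by nra.
    assert (HD : 4 * s * u0 - u0 * u0 -
      (4 * s * u0 * (1 * y0 * / (2 * u0)) + - (1 * y0)) * (x0 - x0)
      - (4 * s * u0 * (x0 * 1 * / (2 * u0)) + - (x0 * 1)) * (y0 - y0) -
      (4 * s * u - u * u -
       ((4 * s * (1 * y0 * / (2 * u0)) + - (1 * y0)) * (x - x0) +
        (4 * s * (x0 * 1 * / (2 * u0)) + - (x0 * 1)) * (y - y0)))
      = (x-x0)*(y-y0) + (2*s/u0)*((a-b)*(a-b))).
    { rewrite Eab. field_simplify_eq; [|lra]. replace (u0^3) with (u0*(u0*u0)) by ring. replace (u0^2) with (u0*u0) by ring. replace (u^2) with (u*u) by ring. rewrite Hu0, Hu. ring. }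
    assert (E1 : (a-b)*(a-b) + (x-x0)*(y-y0) = (u-u0)*(u-u0)).
    { rewrite Eab. replace ((u-u0)*(u-u0)) with (u*u + u0*u0 - 2*u*u0) by ring. rewrite Hu, Hu0. ring. }
    assert (Hk : 2 <= 2*s/u0).
    { apply Rmult_le_reg_r with u0; [lra|]. field_simplify; lra. }
    assert (Hsq : 0 <= (a-b)*(a-b)) by apply Rle_0_sqr.
    match goal with |- ?L >= _ => replace L with ((x-x0)*(y-y0) + (2*s/u0)*((a-b)*(a-b))) by (rewrite <- HD, Hu0, Hu; ring) end.
    rewrite Rmult_1_l, <- Rabs_mult.
    set (P := (x-x0)*(y-y0)) in *.
    assert (HkP : 2*s/u0 * ((a-b)*(a-b)) >= 2*((a-b)*(a-b))) by nra.
    destruct (Rle_dec 0 P).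
    + rewrite Rabs_right by lra. lra.
    + rewrite Rabs_left by lra. pose proof (Rle_0_sqr (u-u0)). unfold Rsqr in *. lra.
Qed.
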